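(* Let $0<\alpha<1$, $0<\tau_1<\tau_2$, and let $\Lambda\subset\mathbb{R}^n$ be a closed set of Lebesgue measure zero. Let $f\in L_{2\alpha}(\mathbb{R}^n)\cap C^\infty(\mathbb{R}^n\setminus\Lambda)\cap L^{\tau_2}_{loc}(\mathbb{R}^n)$ satisfy: there exist $K>0$, $q>0$ such that $K^{-1}d_0(y,\Lambda)^{-q}\leq f(y)\leq Kd_0(y,\Lambda)^{-q}$ for all $y\in\mathbb{R}^n\setminus\Lambda$. Then for every $x\in\mathbb{R}^n\setminus\Lambda$, $$\big((-\Delta)^\alpha f^{\tau_1}\big)(x)\geq\frac{\tau_1}{\tau_2}f^{\tau_1-\tau_2}(x)\big((-\Delta)^\alpha f^{\tau_2}\big)(x).$$
   Context: $d_0$ is the Euclidean distance. $L_{2\alpha}(\mathbb{R}^n)=\{h:\int_{\mathbb{R}^n}\frac{|h(x)|}{1+|x|^{n+2\alpha}}dx<\infty\}$. The fractional Laplacian is $(-\Delta)^\alpha h(x)=-d_{n,\alpha}\int_{\mathbb{R}^n}\frac{h(x+y)+h(x-y)-2h(x)}{|y|^{n+2\alpha}}dy$ for $h\in L_{2\alpha}(\mathbb{R}^n)$, with $d_{n,\alpha}>0$ the normalizing constant making the Fourier symbol $|\xi|^{2\alpha}$. *)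

(* Defs.v *)
From HB Require Import structures.
From mathcomp Require Import all_boot all_order all_algebra.
From mathcomp Require Import all_classical all_reals all_analysis.
Set Implicit Arguments. Unset Strict Implicit. Unset Printing Implicit Defensive.
Import Order.TTheory GRing.Theory Num.Theory.
Import numFieldNormedType.Exports.
Local Open Scope classical_set_scope.
Local Open Scope ring_scope.

Section Rn.
Variable R : realType.

(** Lebesgue measure on R^n is
    built as the iterated product measure of the Lebesgue measure on R,
    living on the iterated product type [itR n] = R * (R * ( ... * unit)),
    transported to ['rV[R]_n] by the canonical bijection [itphi]. *)
Fixpoint itRM (n : nat) : {d : measure_display & measurableType d} :=
  match n with
  | 0 => existT _ _ (unit : measurableType _)
  | k.+1 => existT _ _ ((measurableTypeR R * projT2 (itRM k))%type : measurableType _)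
  end.

Definition itR (n : nat) : measurableType (projT1 (itRM n)) := projT2 (itRM n).

Fixpoint lebn (n : nat) : set (itR n) -> \bar R :=
  match n return set (itR n) -> \bar R with
  | 0 => @dirac _ unit tt R
  | k.+1 => ((@lebesgue_measure R) \x (@lebn k))%E
  end.
Arguments lebn : clear implicits.

(** canonical bijection R * (R * ... ) -> 'rV_n (first component = coordinate 0) *)
Fixpoint itphi (n : nat) : itR n -> 'rV[R]_n :=
  match n return itR n -> 'rV[R]_n with
  | 0 => fun _ => 0
  | k.+1 => fun p => \row_(i < k.+1)
       match unlift ord0 i with Some j => @itphi k p.2 0 j | None => p.1 end
  end.
Arguments itphi : clear implicits.

Definition eucl (n : nat) (x : 'rV[R]_n) : R := Num.sqrt (\sum_(i < n) x 0 i ^+ 2).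
Definition d0 (n : nat) (x y : 'rV[R]_n) : R := eucl (x - y).
Definition dist_set (n : nat) (y : 'rV[R]_n) (L : set 'rV[R]_n) : R :=
  inf [set d0 y z | z in L].

Definition Rn_integral (n : nat) (g : 'rV[R]_n -> R) : \bar R :=
  (\int[lebn n]_y (g (itphi n y))%:E)%E.

Definition Rn_null (n : nat) (L : set 'rV[R]_n) : Prop :=
  exists N : set (itR n), measurable N /\ lebn n N = 0%E /\ itphi n @^-1` L `<=` N.

(** almost-everywhere equality, and Lebesgue-class functions represented by a
    Borel (measurable) representative *)
Definition Rn_ae_eq (n : nat) (h g : 'rV[R]_n -> R) : Prop :=
  exists N : set (itR n), measurable N /\ lebn n N = 0%E /\
    forall y, ~ N y -> h (itphi n y) = g (itphi n y).

Definition Rn_measurable_fun (n : nat) (g : 'rV[R]_n -> R) : Prop :=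
  measurable_fun setT (fun y => g (itphi n y)).

Definition L2alpha (n : nat) (alpha : R) (h : 'rV[R]_n -> R) : Prop :=
  exists g, Rn_measurable_fun g /\ Rn_ae_eq h g /\
    (Rn_integral (fun x => (`|g x| / (1 + eucl x `^ (n%:R + 2 * alpha)))%R) < +oo)%E.

Definition Lloc (n : nat) (p : R) (h : 'rV[R]_n -> R) : Prop :=
  exists g, Rn_measurable_fun g /\ Rn_ae_eq h g /\
    forall Kc : set 'rV[R]_n, compact Kc ->
      (Rn_integral (fun x => ((\1_Kc x) * `|g x| `^ p)%R) < +oo)%E.

Fixpoint iderive (n : nat) (vs : seq 'rV[R]_n) (f : 'rV[R]_n -> R) : 'rV[R]_n -> R :=
  match vs with
  | [::] => f
  | v :: vs' => fun x => 'D_v (iderive vs' f) x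
  end.

Definition smooth_on (n : nat) (U : set 'rV[R]_n) (f : 'rV[R]_n -> R) : Prop :=
  forall vs : seq 'rV[R]_n, forall x, U x ->
    {for x, continuous (iderive vs f)} /\ forall v, derivable (iderive vs f) x v.

(** normalizing constant d_{n,alpha}: chosen so that the Fourier symbol is
    |xi|^{2 alpha}; evaluating the operator on x |-> exp(i xi.x) with xi = e_1
    gives d_{n,alpha} * 2 * \int (1 - cos y_1)/|y|^{n+2alpha} dy = 1. *)
Definition first_coord (n : nat) (y : 'rV[R]_n) : R :=
  \sum_(i < n) (if val i == 0%N then y 0 i else 0).

Definition dconst (n : nat) (alpha : R) : R :=
  (2 * fine (Rn_integral (fun y : 'rV[R]_n =>
       (1 - cos (first_coord y)) / eucl y `^ (n%:R + 2 * alpha))))^-1.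

Definition fraclap (n : nat) (alpha : R) (h : 'rV[R]_n -> R) (x : 'rV[R]_n) : \bar R :=
  (- (dconst n alpha)%:E *
     Rn_integral (fun y => ((h (x + y) + h (x - y) - 2 * h x) / eucl y `^ (n%:R + 2 * alpha))%R))%E.

End Rn.

(* Main.v *)
Require Import Defs.
From HB Require Import structures.
From mathcomp Require Import all_boot all_order all_algebra.
From mathcomp Require Import all_classical all_reals all_analysis.
From mathcomp Require Import ring lra.
Import Order.TTheory GRing.Theory Num.Theory.
Import numFieldNormedType.Exports.
Local Open Scope classical_set_scope.
Local Open Scope ring_scope.

Section gen.
Local Open Scope ereal_scope.
Context d (T : measurableType d) (R : realType) (mu : set T -> \bar R).
Hypothesis mu0 : mu set0 = 0.
Hypothesis mu_ge0 : forall A, 0 <= mu A.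
Import HBNNSimple.

Definition nnI (g : T -> \bar R) := ereal_sup [set sintegral mu h |
  h in [set h : {nnsfun T >-> R} | forall x, (h x)%:E <= g x]].

Lemma mulemu_ge0' (h : {nnsfun T >-> R}) x : 0 <= x%:E * mu (h @^-1` [set x]).
Proof.
have [x0|x0] := leP 0%R x; first by rewrite mule_ge0.
by rewrite preimage_nnfun0// mu0 mule0.
Qed.

Lemma sint_scale (r : R) (f : {nnsfun T >-> R}) : (0 < r)%R ->
  sintegral mu (cst r \* f)%R = r%:E * sintegral mu f.
Proof.
move=> r0'; have r0 : r != 0%R by rewrite gt_eqF.
rewrite !sintegralET ge0_mule_fsumr; last exact: mulemu_ge0'.
rewrite (reindex_fsbigT ( *%R r))/=; last first.
  by exists ( *%R r^-1); [exact: mulKf|exact: mulVKf].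
by apply: eq_fsbigr => x; rewrite preimage_cstM// [(_ / r)%R]mulrC mulKf// muleA.
Qed.

Lemma nnI_scale (k : R) (g : T -> \bar R) : (0 < k)%R ->
  nnI (fun x => k%:E * g x) = k%:E * nnI g.
Proof.
move=> k0; rewrite /nnI -ereal_sup_pZl//; congr ereal_sup.
apply/seteqP; split => e /=.
- move=> [h hk <-].
  have k0' : (0 <= k^-1)%R by rewrite invr_ge0 ltW.
  exists (sintegral mu (scale_nnsfun h k0')).
    exists (scale_nnsfun h k0') => // x /=.
    rewrite EFinM -(@lee_pmul2l _ k%:E) ?lte_fin// muleA -EFinM mulfV ?gt_eqF//.
    by rewrite mul1r; exact: hk.
  rewrite -sint_scale//; apply: eq_sintegral => x /=.
  by rewrite mulrA mulfV ?gt_eqF// mul1r.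
- move=> [e0 [h hg <-] <-].
  have k0' : (0 <= k)%R by rewrite ltW.
  exists (scale_nnsfun h k0') => //=.
    by move=> x /=; rewrite EFinM lee_pmul2l ?lte_fin.
  by rewrite -sint_scale.
Qed.

Lemma nnI_le (g1 g2 : T -> \bar R) : (forall x, g1 x <= g2 x) -> nnI g1 <= nnI g2.
Proof.
move=> g12; apply: ereal_sup_le => _ [h hg <-]; exists h => // x.
exact: le_trans (hg x) (g12 x).
Qed.

Lemma integralTE (F : T -> \bar R) :
  integral mu setT F = nnI (F^\+) - nnI (F^\-).
Proof. by rewrite /integral patch_setT. Qed.

Lemma mulEB (k : R) (a b : \bar R) : (0 < k)%R -> 0 <= a -> 0 <= b ->
  k%:E * (a - b) = k%:E * a - k%:E * b.
Proof.
move=> k0; case: a => [a| |] //; case: b => [b| |] //= a0 b0.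
- by rewrite -!EFinM mulrBr.
all: have ky : k%:E * +oo = +oo by rewrite mulry gtr0_sg// mul1e.
all: have kny : k%:E * -oo = -oo by rewrite mulrNy gtr0_sg// mul1e.
all: rewrite /= ?ky ?kny //.
Qed.

Lemma sint0 : sintegral mu (cst 0%R) = 0.
Proof.
rewrite sintegralET fsbig1// => r _; rewrite preimage_cst.
by case: ifPn => [/[!inE] <-|]; rewrite ?mul0e// mu0 mule0.
Qed.

Lemma nnI_ge0 (g : T -> \bar R) : (forall x, 0 <= g x) -> 0 <= nnI g.
Proof.
move=> g0; apply: ereal_sup_ubound; exists nnsfun0 => //; exact: sint0.
Qed.

Lemma int_le_scale (k : R) (u v : T -> \bar R) : (0 < k)%R ->
  (forall x, u x <= k%:E * v x) ->
  integral mu setT u <= k%:E * integral mu setT v.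
Proof.
move=> k0 uv; rewrite !integralTE mulEB//; last 2 first.
- by apply: nnI_ge0 => x; rewrite funeposE Order.TotalTheory.le_max lexx orbT.
- by apply: nnI_ge0 => x; rewrite funenegE Order.TotalTheory.le_max lexx orbT.
rewrite -!nnI_scale//; apply: leeB; apply: nnI_le => x.
- rewrite !funeposE Order.TotalTheory.ge_max; apply/andP; split.
    apply: le_trans (uv x) _; rewrite lee_pmul2l ?lte_fin// Order.TotalTheory.le_max lexx//.
  by apply: mule_ge0; [rewrite lee_fin ltW|rewrite Order.TotalTheory.le_max lexx orbT].
- rewrite !funenegE.
  have [vx|vx] := leP (- v x) 0.
    by rewrite mule0 Order.TotalTheory.le_max lexx orbT.
  rewrite Order.TotalTheory.le_max; apply/orP; left.
  by rewrite muleN leeN2 uv.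
Qed.

Lemma nnI0 (g : T -> \bar R) : (forall x, g x <= 0) -> nnI g <= 0.
Proof.
move=> g0; apply: ge_ereal_sup => _ [h hg <-].
rewrite (eq_sintegral (cst 0%R)) ?sint0// => x /=.
apply/eqP; rewrite eq_le fun_ge0 andbT -lee_fin.
exact: le_trans (hg x) (g0 x).
Qed.

Lemma int_ge0' (F : T -> \bar R) : (forall x, 0 <= F x) -> 0 <= integral mu setT F.
Proof.
move=> F0; rewrite integralTE -[0]sube0; apply: leeB.
- by apply: nnI_ge0 => x; rewrite funeposE Order.TotalTheory.le_max lexx orbT.
- apply: nnI0 => x; rewrite funenegE Order.TotalTheory.ge_max lexx andbT.
  by rewrite oppe_le0.
Qed.

End gen.

Section reals.
Variable R : realType.

Lemma ln_le1 {y : R} : 0 < y -> ln y <= y - 1.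
Proof. by move=> y0; have := expR_ge1Dx (ln y); rewrite lnK ?posrE//; lra. Qed.

Lemma amgm {s r : R} : 0 < s -> s < 1 -> 0 <= r -> r `^ s <= s * r + (1 - s).
Proof.
move=> s0 s1; rewrite le_eqVlt => /predU1P[<-|r0].
  rewrite powR0 ?gt_eqF//; lra.
set A := s * r + (1 - s).
have sr : 0 < s * r by rewrite mulr_gt0.
have A0 : 0 < A by rewrite /A; lra.
have h1 := ln_le1 (divr_gt0 r0 A0).
have A0' : 0 < A^-1 by rewrite invr_gt0.
have h2 := ln_le1 A0'.
rewrite lnM ?posrE ?invr_gt0// lnV ?posrE// in h1; rewrite lnV ?posrE// in h2.
have e : s * (r / A - 1) + (1 - s) * (A^-1 - 1) = 0.
  by rewrite /A; field; rewrite lt0r_neq0.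
have h1' : s * (ln r + - ln A) <= s * (r / A - 1) by rewrite ler_wpM2l// ltW.
have h2' : (1 - s) * (- ln A) <= (1 - s) * (A^-1 - 1) by rewrite ler_wpM2l// subr_ge0 ltW.
have h : s * ln r <= ln A by lra.
by rewrite /powR gt_eqF// -(lnK (x:=A)) ?posrE// ler_expR.
Qed.

Lemma conc (s a b : R) : 0 < s -> s < 1 -> 0 < a -> 0 <= b ->
  b `^ s - a `^ s <= s * a `^ (s - 1) * (b - a).
Proof.
move=> s0 s1 a0 b0.
have h := amgm (r:=b/a) s0 s1 (divr_ge0 b0 (ltW a0)).
have eb : b `^ s = (b / a) `^ s * a `^ s.
  rewrite -powRM.
  - by rewrite divfK // lt0r_neq0.
  - exact: divr_ge0 b0 (ltW a0).
  - exact: ltW.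
have ea : a `^ (s - 1) = a `^ s / a.
  rewrite powRB ?(gt_eqF a0) ?implybT //.
  by congr (_ / _); exact: powRr1 (ltW a0).
have P0 : 0 < a `^ s by rewrite powR_gt0.
move: eb ea => -> ->.
have h' := ler_wpM2r (ltW P0) h.
have -> : s * (a `^ s / a) * (b - a) = (s * (b / a) + (1 - s)) * a `^ s - a `^ s.
  by field; rewrite gt_eqF.
lra.
Qed.

Lemma comb (X Y Z P s b1 b2 a : R) : X - Z <= s * P * (b1 - a) ->
  Y - Z <= s * P * (b2 - a) -> X + Y - 2 * Z <= s * P * (b1 + b2 - 2 * a).
Proof.
move=> h1 h2; have := lerD h1 h2.
have -> : X - Z + (Y - Z) = X + Y - 2 * Z by ring.
by have -> : s * P * (b1 - a) + s * P * (b2 - a) = s * P * (b1 + b2 - 2 * a) by ring.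
Qed.

Lemma final (d c : R) (I1 I2 : \bar R) : 0 <= d -> (I1 <= c%:E * I2)%E ->
  (c%:E * (- d%:E * I2) <= - d%:E * I1)%E.
Proof.
move=> d0 I12; rewrite muleCA !mulNe leeN2.
by apply: lee_wpmul2l; rewrite ?lee_fin.
Qed.

End reals.

Lemma norm_le_eucl (R : realType) n (v : 'rV[R]_n) : `|v| <= eucl v.
Proof.
rewrite /Num.norm /= mx_normrE.
apply/bigmax_leP; split; first exact: sqrtr_ge0.
move=> ij _; have -> : ij.1 = 0 by apply: ord1.
rewrite -sqrtr_sqr /eucl ler_sqrt; last by apply: sumr_ge0 => i _; exact: sqr_ge0.
rewrite (bigD1 ij.2) //= lerDl; apply: sumr_ge0 => i _; exact: sqr_ge0.
Qed.

Lemma dist_pos (R : realType) n (L : set 'rV[R]_n) x :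
  closed L -> L !=set0 -> ~ L x -> 0 < dist_set x L.
Proof.
move=> cL [z0 Lz0] nLx.
have : nbhs x (~` L) by have := closed_openC cL; rewrite openE => /(_ x nLx).
move/nbhs_ballP => [e /= e0 He].
apply: (lt_le_trans e0); apply: lb_le_inf; first by exists (d0 x z0), z0.
move=> _ [z Lz <-]; rewrite /d0.
apply: (le_trans _ (@norm_le_eucl _ _ (x - z))).
rewrite leNgt; apply/negP => hz; apply: (He z) => //.
by rewrite -ball_normE /ball_ /=.
Qed.

Lemma lebn_ge0 (R : realType) n : forall (A : set (itR R n)), (0 <= @lebn R n A)%E.
Proof.
elim: n => [|k IH] A /=; first exact: measure_ge0.
rewrite /product_measure1; apply: integral_ge0 => y _; exact: IH.
Qed.

Lemma lebn0 (R : realType) n : @lebn R n set0 = 0%E.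
Proof.
elim: n => [|k IH] /=; first exact: measure0.
rewrite /product_measure1; apply: integral0_eq => y _ /=.
by rewrite xsection0.
Qed.

Theorem proposition3p15 (R : realType) (n : nat) (alpha tau1 tau2 : R)
    (Lambda : set 'rV[R]_n) (f : 'rV[R]_n -> R) :
  (0 < n)%N ->
  0 < alpha -> alpha < 1 ->
  0 < tau1 -> tau1 < tau2 ->
  closed Lambda -> Lambda !=set0 -> Rn_null Lambda ->
  L2alpha alpha f ->
  smooth_on (~` Lambda) f ->
  Lloc tau2 f ->
  (exists K q : R, 0 < K /\ 0 < q /\
     forall y, ~ Lambda y ->
       K^-1 * dist_set y Lambda `^ (- q) <= f y /\
       f y <= K * dist_set y Lambda `^ (- q)) ->
  forall x, ~ Lambda x ->
    (fraclap alpha (fun y => (f y `^ tau1)%R) x >=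
     ((tau1 / tau2) * f x `^ (tau1 - tau2))%:E *
       fraclap alpha (fun y => (f y `^ tau2)%R) x)%E.
Proof.
move=> n0 a0 a1 t1 t12 clL neL nullL L2 sm Ll [K [q [K0 [q0 Kb]]]] x nLx.
have t2 : 0 < tau2 by apply: lt_trans t12.
set s := tau1 / tau2.
have s0 : 0 < s by rewrite /s divr_gt0.
have s1 : s < 1 by rewrite /s ltr_pdivrMr// mul1r.
have fx0 : 0 < f x.
  have [h _] := Kb x nLx; apply: lt_le_trans h.
  by rewrite mulr_gt0 ?invr_gt0// powR_gt0// dist_pos.
set a := f x `^ tau2.
have aa0 : 0 < a by rewrite /a powR_gt0.
set c := s * f x `^ (tau1 - tau2).
have c0 : 0 < c by rewrite /c mulr_gt0// powR_gt0.
have key w : f w `^ tau1 = (f w `^ tau2) `^ s.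
  by rewrite -powRrM /s mulrC divfK// gt_eqF.
have ca : c = s * a `^ (s - 1).
  rewrite /c /a -powRrM; congr (_ * _ `^ _).
  by rewrite /s mulrBr mulr1 mulrC divfK// gt_eqF.
have pt y : ((f (x + y) `^ tau1 + f (x - y) `^ tau1 - 2 * f x `^ tau1) /
      eucl y `^ (n%:R + 2 * alpha)) <=
    c * ((f (x + y) `^ tau2 + f (x - y) `^ tau2 - 2 * f x `^ tau2) /
      eucl y `^ (n%:R + 2 * alpha)).
  rewrite mulrA ler_wpM2r ?invr_ge0 ?powR_ge0// !key -/a ca.
  have h1 := @conc R s a (f (x + y) `^ tau2) s0 s1 aa0 (powR_ge0 _ _).
  have h2 := @conc R s a (f (x - y) `^ tau2) s0 s1 aa0 (powR_ge0 _ _).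
  exact: comb h1 h2.
have dge : 0 <= dconst n alpha.
  rewrite /dconst invr_ge0 mulr_ge0// fine_ge0// /Rn_integral.
  apply: int_ge0'; first exact: lebn0.
  by move=> y; rewrite lee_fin divr_ge0 ?powR_ge0// subr_ge0 cos_le1.
rewrite /fraclap /Rn_integral; apply: final dge _.
apply: (@int_le_scale _ _ _ _ (lebn0 _ _) (@lebn_ge0 _ _) c _ _ c0) => y.
by rewrite -EFinM lee_fin; exact: pt.
Qed.
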